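(* Let $O,A,B$ be three pairwise distinct points of the plane, $\vec\alpha=\overrightarrow{AO}/OA$, $\vec\beta=\overrightarrow{OB}/OB$, with oriented angle $\Omega=(\widehat{\vec\alpha,\vec\beta})\in\,]0,\pi[$. Let $p\ge2$, $\theta_0=\Omega/p$, and let $\mathcal{E}_p$ be the set of curves in $\mathcal{E}$ consisting of $p$ consecutive arcs of circle of radii $R_0,\dots,R_{p-1}>0$, each turning counterclockwise by the angle $\theta_0$, starting at $A$ with tangent $\vec\alpha$; identify such a curve with $R=(R_0,\dots,R_{p-1})\in(\mathbb{R}_+^* )^p$, so that $\mathcal{E}_p=\{R\in(\mathbb{R}_+^* )^p:\mathcal{A}R=\mathcal{B}\}$ with $\mathcal{A},\mathcal{B}$ as in the context. If $\mathcal{E}_p$ is nonempty, then there exists $X\in\mathcal{E}_p$ minimizing the maximum of the curvature: $$\big\|\,\|X''\|\,\big\|_{L^\infty(0,L(X))}=\min_{Z\in\mathcal{E}_p}\big\|\,\|Z''\|\,\big\|_{L^\infty(0,L(Z))}.$$ Setting $F(X)=\min_{1\le k\le p}X_k$ for $X=(X_1,\dots,X_p)\in\mathbb{R}_+^p$, this problem is equivalent to $$F(X)=\max_{Z\in(\mathbb{R}_+^* )^p,\ \mathcal{A}Z=\mathcal{B}}F(Z),$$ which admits a solution as soon as there exists $X^0\in(\mathbb{R}_+^* )^p$ with $\mathcal{A}X^0=\mathcal{B}$.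
   Context: $\mathcal{E}$ is the set of curves $X:[0,L]\to\mathbb{R}^2$ ($L>0$), $X\in W^{2,\infty}(0,L;\mathbb{R}^2)$, with $\|X'(s)\|=1$, $X(0)=A$, $X(L)=B$, $X'(0)=\vec\alpha$, $X'(L)=\vec\beta$, and nondecreasing continuous angle $\phi(s)=(\widehat{\vec\alpha,X'(s)})$. Identifying the plane with $\mathbb{C}$ via the orthonormal frame with origin $A$ and first axis $\vec\alpha$, with $b$ the affix of $B$: $\mathcal{A}\in\mathcal{M}_{2,p}(\mathbb{R})$ has entries $\mathcal{A}_{1,k}=\operatorname{Re}(i(1-e^{i\theta_0})e^{i(k-1)\theta_0})$, $\mathcal{A}_{2,k}=\operatorname{Im}(i(1-e^{i\theta_0})e^{i(k-1)\theta_0})$, and $\mathcal{B}=(\operatorname{Re}b,\operatorname{Im}b)^T$. $\|\,\|X''\|\,\|_{L^\infty}$ is the essential supremum of $\|X''\|$. *)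

(* Defs.v *)
From mathcomp Require Import all_boot all_order all_algebra.
From mathcomp Require Import all_classical all_reals all_analysis.
Set Implicit Arguments. Unset Strict Implicit. Unset Printing Implicit Defensive.
Import Order.TTheory GRing.Theory Num.Theory.
Local Open Scope ring_scope.
Local Open Scope classical_set_scope.

Section Defs.
Variable R : realType.

Definition vsub (P Q : R * R) : R * R := (P.1 - Q.1, P.2 - Q.2).
Definition vnorm (u : R * R) : R := Num.sqrt (u.1 ^+ 2 + u.2 ^+ 2).
Definition vscale (c : R) (u : R * R) : R * R := (c * u.1, c * u.2).
Definition vrot (t : R) (u : R * R) : R * R :=
  (cos t * u.1 - sin t * u.2, sin t * u.1 + cos t * u.2).

Definition alpha_vec (O A : R * R) := vscale (vnorm (vsub O A))^-1 (vsub O A).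
Definition beta_vec (O B : R * R) := vscale (vnorm (vsub B O))^-1 (vsub B O).

(* affix b of B in the orthonormal frame with origin A and first axis alpha
   (second axis = alpha rotated by +pi/2) *)
Definition affix_re (al : R * R) (A B : R * R) : R :=
  (vsub B A).1 * al.1 + (vsub B A).2 * al.2.
Definition affix_im (al : R * R) (A B : R * R) : R :=
  al.1 * (vsub B A).2 - al.2 * (vsub B A).1.

(* The matrix \mathcal{A}: column k (0-indexed j = k-1) is the complex number
   i (1 - e^{i th0}) e^{i j th0} = i (e^{i j th0} - e^{i (j+1) th0}). *)
Definition matA (p : nat) (th0 : R) : 'M[R]_(2, p) :=
  \matrix_(i < 2, j < p)
     if i == 0 :> nat
     then sin (j.+1%:R * th0) - sin (j%:R * th0)
     else cos (j%:R * th0) - cos (j.+1%:R * th0).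

Definition vecB (bre bim : R) : 'cV[R]_2 :=
  \col_(i < 2) if i == 0 :> nat then bre else bim.

Definition Ep (p : nat) (th0 bre bim : R) : set 'cV[R]_p :=
  [set Z : 'cV[R]_p | (forall k, 0 < Z k 0) /\ matA p th0 *m Z = vecB bre bim].

(* F(X) = min_k X_k on R_+^p.  The seed of the iterated min is
   \sum_k X_k, which dominates every X_k on R_+^p, so for p >= 1 this is
   exactly min_k X_k there. *)
Definition Fmin (p : nat) (X : 'cV[R]_p) : R :=
  \big[Num.min/(\sum_k X k 0)]_k X k 0.

(* || ||X''|| ||_{L^infty} of the curve made of p arcs of circles of radii
   R_0..R_{p-1}: on the k-th arc ||X''|| = 1/R_k, so its essential supremum
   is max_k 1/R_k. *)
Definition curv_max (p : nat) (Rv : 'cV[R]_p) : R :=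
  \big[Num.max/0]_k (Rv k 0)^-1.

End Defs.

(* Main.v *)
Require Import Defs.
From mathcomp Require Import all_boot all_order all_algebra.
From mathcomp Require Import all_classical all_reals all_analysis.
From mathcomp Require Import lra ring.
Import Order.TTheory GRing.Theory Num.Theory numFieldNormedType.Exports.
Local Open Scope ring_scope.
Local Open Scope classical_set_scope.

Section H.
Variable R : realType.

Lemma bigmin_le_seq (I : eqType) (r : seq I) (s : R) (F : I -> R) x :
  x \in r -> \big[Num.min/s]_(j <- r) F j <= F x.
Proof.
elim: r => [//|a r IH]; rewrite inE big_cons => /orP[/eqP->|xr].
  by rewrite ge_min lexx.
by rewrite ge_min IH ?orbT.
Qed.

Lemma bigmax_ge_seq (I : eqType) (r : seq I) (s : R) (F : I -> R) x :
  x \in r -> F x <= \big[Num.max/s]_(j <- r) F j.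
Proof.
elim: r => [//|a r IH]; rewrite inE big_cons => /orP[/eqP->|xr].
  by rewrite le_max lexx.
by rewrite le_max IH ?orbT.
Qed.



Lemma cont_sum (T : topologicalType) (I : Type) (r : seq I) (F : I -> T -> R) :
  (forall i, continuous (F i)) -> continuous (fun x => \sum_(i <- r) F i x).
Proof.
move=> HF; elim: r => [|i r IH].
  under eq_fun do rewrite big_nil. exact: cst_continuous.
under eq_fun do rewrite big_cons.
by move=> x; apply: continuousD; [exact: HF|exact: IH].
Qed.

Lemma cont_bigmin (T : topologicalType) (I : Type) (r : seq I) (s : T -> R) (F : I -> T -> R) :
  continuous s -> (forall i, continuous (F i)) ->
  continuous (fun x => \big[Num.min/s x]_(i <- r) F i x).
Proof.
move=> Hs HF; elim: r => [|i r IH].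
  by under eq_fun do rewrite big_nil.
under eq_fun do rewrite big_cons.
by move=> x; apply: continuous_min; [exact: HF|exact: IH].
Qed.
Lemma w_pos (Om : R) (p j : nat) : 0 < Om < pi -> (j < p)%N ->
  0 < sin (j.+1%:R * (Om / p%:R) - Om / 2) - sin (j%:R * (Om / p%:R) - Om / 2).
Proof.
move=> /andP[HO0 HOpi] jp; set th := Om / p%:R.
have p0 : (0 < p%:R :> R) by rewrite ltr0n (leq_ltn_trans _ jp).
have th0 : 0 < th by rewrite divr_gt0.
have hpi : Om / 2 < pi / 2 by rewrite ltr_pM2r.
have jle : j.+1%:R * th <= Om.
  by rewrite /th mulrA ler_pdivrMr // mulrC ler_pM2l // ler_nat.
have jS : j.+1%:R * th = j%:R * th + th by rewrite -nat1r mulrDl mul1r addrC.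
have j0 : 0 <= j%:R * th by rewrite mulr_ge0 // ltW.
move: jle; rewrite jS => jle.
set a := j%:R * th in j0 jle *.
rewrite subr_gt0 ltr_sin ?in_itv /=; try (apply/andP; split); lra.
Qed.


Lemma bigmin_cases (I : eqType) (r : seq I) (s : R) (F : I -> R) :
  \big[Num.min/s]_(j <- r) F j = s \/ exists k, \big[Num.min/s]_(j <- r) F j = F k.
Proof.
elim: r => [|a r IH]; first by rewrite big_nil; left.
rewrite big_cons minEle; case: ifP => _; first by right; exists a.
exact: IH.
Qed.

Lemma term_le_sum n (F : 'I_n -> R) k : (forall j, 0 <= F j) -> F k <= \sum_j F j.
Proof.
by move=> H; rewrite (bigD1 k) //= lerDl sumr_ge0.
Qed.

Lemma bigmax_le (I : Type) (r : seq I) (F : I -> R) c :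
  0 <= c -> (forall i, F i <= c) -> \big[Num.max/0]_(j <- r) F j <= c.
Proof.
move=> c0 H; elim: r => [|a r IH]; first by rewrite big_nil.
by rewrite big_cons ge_max H IH.
Qed.

Lemma Fmin_le p (Z : 'cV[R]_p) k : Fmin Z <= Z k ord0.
Proof. by apply: bigmin_le_seq; rewrite mem_index_enum. Qed.

Lemma Fmin_att p (Z : 'cV[R]_p) : (0 < p)%N -> (forall k, 0 <= Z k ord0) ->
  exists k, Fmin Z = Z k ord0.
Proof.
move=> p0 H; case: (@bigmin_cases _ (index_enum 'I_p) (\sum_k Z k ord0) (fun k => Z k ord0)).
  move=> E; exists (Ordinal p0); apply/eqP; rewrite eq_le Fmin_le /=.
  rewrite /Fmin E; exact (@term_le_sum p (fun k => Z k ord0) (Ordinal p0) H).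
by move=> [k Ek]; exists k.
Qed.

Lemma curv_eq p (X : 'cV[R]_p) : (0 < p)%N -> (forall k, 0 < X k ord0) ->
  curv_max X = (Fmin X)^-1.
Proof.
move=> p0 H.
have [k Ek] := @Fmin_att p X p0 (fun k => ltW (H k)).
have F0 : 0 < Fmin X by rewrite Ek.
apply/eqP; rewrite eq_le; apply/andP; split.
  apply: bigmax_le; first by rewrite invr_ge0 ltW.
  by move=> i; rewrite lef_pV2 ?posrE // Fmin_le.
rewrite Ek; exact (@bigmax_ge_seq _ (index_enum 'I_p) 0 (fun i => (X i ord0)^-1) k (mem_index_enum k)).
Qed.

Lemma key_id p (Om a b : R) (Z : 'cV[R]_p) :
  matA p (Om / p%:R) *m Z = vecB a b ->
  cos (Om / 2) * a + sin (Om / 2) * b =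
  \sum_(j < p) (sin (j.+1%:R * (Om / p%:R) - Om / 2) - sin (j%:R * (Om / p%:R) - Om / 2)) * Z j ord0.
Proof.
move=> HZ.
have e0 := congr1 (fun M : 'M[R]_(2,1) => M ord0 ord0) HZ.
have e1 := congr1 (fun M : 'M[R]_(2,1) => M (@ord_max 1) ord0) HZ.
rewrite /= !mxE /= in e0 e1.
rewrite -e0 -e1 !mulr_sumr -big_split /=; apply: eq_bigr => j _.
rewrite !mxE /= !sinB; ring.
Qed.

End H.

Theorem theorem5p4 (R : realType) (O A B : R * R) (Omega : R) (p : nat) :
  O != A -> O != B -> A != B ->
  0 < Omega < pi ->
  beta_vec O B = vrot Omega (alpha_vec O A) ->
  (2 <= p)%N ->
  let th0 := Omega / p%:R in
  let E := @Ep R p th0 (affix_re (alpha_vec O A) A B) (affix_im (alpha_vec O A) A B) in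
  E !=set0 ->
  (exists X, E X /\ (forall Z, E Z -> curv_max X <= curv_max Z))
  /\ (forall X, E X ->
        ((forall Z, E Z -> curv_max X <= curv_max Z) <->
         (forall Z, E Z -> Fmin Z <= Fmin X)))
  /\ (exists X, E X /\ (forall Z, E Z -> Fmin Z <= Fmin X)).
Proof.
move=> _ _ _ HOm _ hp th0 E [Z0 EZ0].
have p0 : (0 < p)%N by apply: leq_trans hp.
move: (affix_re _ _ _) (affix_im _ _ _) @E EZ0 => a b E EZ0.
have Epos Z : E Z -> 0 < Fmin Z.
  move=> [HZ _]; have [k ->] := @Fmin_att _ p Z p0 (fun k => ltW (HZ k)); exact: HZ.
have curvE Z : E Z -> curv_max Z = (Fmin Z)^-1.
  by move=> [HZ _]; apply: curv_eq.
have part2 X : E X ->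
    ((forall Z, E Z -> curv_max X <= curv_max Z) <->
     (forall Z, E Z -> Fmin Z <= Fmin X)).
  move=> EX; split => H Z EZ; have := H Z EZ;
    by rewrite !curvE // lef_pV2 ?posrE ?Epos.
suff [X [EX HX]] : exists X, E X /\ (forall Z, E Z -> Fmin Z <= Fmin X).
  split; first by exists X; split => //; apply/part2.
  by split => //; exists X.
pose h := Omega / 2.
pose w (j : 'I_p) := sin (j.+1%:R * th0 - h) - sin (j%:R * th0 - h).
have wpos j : 0 < w j by apply: w_pos.
pose cB := cos h * a + sin h * b.
have cBE Z : E Z -> cB = \sum_j w j * Z j ord0.
  by move=> [_ HZ]; exact: key_id HZ.
have cB0 : 0 <= cB.
  rewrite (cBE _ EZ0); apply: sumr_ge0 => j _; rewrite mulr_ge0 // ltW //.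
  exact: EZ0.1.
pose Bd := \sum_(j < p) cB / w j.
have bound Z : E Z -> forall k, Z k ord0 <= Bd.
  move=> EZ k.
  have : w k * Z k ord0 <= cB.
    rewrite (cBE _ EZ); refine (@term_le_sum _ p (fun j => w j * Z j ord0) k _).
    by move=> j; rewrite mulr_ge0 // ltW // EZ.1.
  rewrite -ler_pdivlMl // => H; apply: le_trans H _.
  rewrite mulrC; refine (@term_le_sum _ p (fun j => cB / w j) k _).
  by move=> j; rewrite divr_ge0 // ltW.
pose m := Fmin Z0.
have m0 : 0 < m by exact: Epos.
pose K : set 'rV[R]_p :=
  \bigcap_(k in setT) [set v | m <= v ord0 k] `&`
  \bigcap_(i in setT) [set v | \sum_j matA p th0 i j * v ord0 j = vecB a b i ord0].
have KE v : K v -> E v^T.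
  move=> [K1 K2]; split.
    by move=> k; rewrite mxE; apply: lt_le_trans m0 (K1 k I).
  apply/matrixP => i j; rewrite !mxE (ord1 j); have := K2 i I; rewrite [vecB _ _ _ _]mxE => <-.
  by apply: eq_bigr => k _; rewrite !mxE.
have EK Z : E Z -> (forall k, m <= Z k ord0) -> K Z^T.
  move=> [_ HZ] Hm; split => [k _|i _] /=; first by rewrite mxE.
  have := congr1 (fun M : 'M[R]_(2,1) => M i ord0) HZ; rewrite /= mxE => <-.
  by apply: eq_bigr => k _; rewrite !mxE.
pose f (v : 'rV[R]_p) := Fmin v^T.
have coordT k : (fun v : 'rV[R]_p => v^T k ord0) = (fun v => v ord0 k).
  by apply: funext => v; rewrite mxE.
have fcont : continuous f.
  rewrite /f /Fmin; apply: cont_bigmin.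
    apply: cont_sum => k; rewrite coordT; exact: coord_continuous.
  by move=> k; rewrite coordT; exact: coord_continuous.
have Kcl : closed K.
  apply: closedI; apply: closed_bigI => i _.
    apply: (@preimage_closed _ _ (fun v : 'rV[R]_p => v ord0 i) [set x : R | m <= x]).
      by move=> v _; exact: coord_continuous.
    exact: closed_ge.
  apply: (@preimage_closed _ _ (fun v : 'rV[R]_p => \sum_j matA p th0 i j * v ord0 j) [set x : R | x = vecB a b i ord0]); last exact: closed_eq.
  move=> v _; apply: cont_sum => j x; apply: continuousM.
    exact: cst_continuous.
  exact: coord_continuous.
have Kco : compact K.
  have Bco := @rV_compact R p (fun _ => `[0, Bd]%classic) (fun _ => @segment_compact R 0 Bd).
  apply: (subclosed_compact Kcl Bco).
  move=> v Kv i /=; have EV := KE v Kv.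
  rewrite in_itv /=; have := bound _ EV i; have := EV.1 i; rewrite !mxE => H1 H2.
  by rewrite H2 ltW.
have K0 : K Z0^T by apply: EK => // k; exact: Fmin_le.
have [c cK cmax] := @compact_EVT_max _ _ f K (ex_intro _ _ K0) Kco (continuous_subspaceT fcont).
exists c^T; split; first by apply: KE; rewrite inE in cK.
move=> Z EZ.
have fZ0 : f Z0^T = m by rewrite /f trmxK.
have [allm|] := pselect (forall k, m <= Z k ord0).
  have := cmax Z^T; rewrite /f trmxK; apply; rewrite inE; exact: EK.
move=> /existsNP [k /negP]; rewrite -ltNge => Hk.
apply: le_trans (@Fmin_le _ _ Z k) _; apply: ltW; apply: lt_le_trans Hk _.
by rewrite -fZ0; apply: cmax; rewrite inE.
Qed.
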